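(* The sets $\{3,4,7\}$, $\{3,6,7\}$, $\{4,5,8,9\}$, $\{4,7,8,11\}$, and $\{5,8,9,12,13\}$ lie both in $\mathcal L(C_6)$ and in $\mathcal L(C_2^5)$.
   Context: $C_n$ denotes a cyclic group of order $n$ and $C_2^r$ an elementary abelian $2$-group of rank $r$. For a subset $G_0$ of a finite abelian group $G$, a sequence over $G_0$ is an element of the free abelian monoid $\mathcal F(G_0)$ with basis $G_0$ (a finite unordered list of elements of $G_0$, repetitions allowed). $\mathcal B(G_0)$ is the monoid of zero-sum sequences over $G_0$ (including the empty sequence). An atom is a minimal zero-sum sequence, i.e. a nonempty zero-sum sequence that is not a product of two nonempty zero-sum sequences. For $B\in\mathcal B(G_0)$, $\mathsf L(B)=\{k\in\mathbb N_0: B \text{ is a product of } k \text{ atoms}\}$, and $\mathcal L(G_0)=\{\mathsf L(B):B\in\mathcal B(G_0)\}$; $\mathcal L(G)$ is the case $G_0=G$. *)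

(* Defs.v *)
From mathcomp Require Import all_boot all_order all_algebra.
Set Implicit Arguments. Unset Strict Implicit. Unset Printing Implicit Defensive.
Import GRing.Theory.
Local Open Scope ring_scope.

(* Sequences over G are represented by lists, identified up to permutation
   (perm_eq), i.e. elements of the free abelian monoid F(G). *)
Definition zero_sum (G : zmodType) (s : seq G) : bool := \sum_(g <- s) g == 0.

Definition atom (G : zmodType) (s : seq G) : Prop :=
  [/\ s != [::], zero_sum s &
     ~ exists s1 s2 : seq G, [/\ s1 != [::], s2 != [::], zero_sum s1,
                                 zero_sum s2 & perm_eq s (s1 ++ s2)]].

Definition in_lengths (G : zmodType) (B : seq G) (k : nat) : Prop :=
  exists As : seq (seq G), [/\ size As = k, (forall A, A \in As -> atom A)
                              & perm_eq B (flatten As)].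

Definition in_system_of_lengths (G : zmodType) (L : nat -> Prop) : Prop :=
  exists B : seq G, zero_sum B /\ forall k, L k <-> in_lengths B k.
Arguments in_system_of_lengths G L : clear implicits.

(* Main.v *)
Require Import Defs.
From mathcomp Require Import all_boot all_order all_algebra.
From mathcomp Require Import zify.
Set Implicit Arguments. Unset Strict Implicit. Unset Printing Implicit Defensive.
Import GRing.Theory.

Fixpoint expand (T : Type) (U : seq T) (c : seq nat) : seq T :=
  match U, c with u :: U', k :: c' => nseq k u ++ expand U' c' | _, _ => [::] end.

Fixpoint boxes (n : seq nat) : seq (seq nat) :=
  match n with
  | [::] => [:: [::]]
  | k :: n' => [seq i :: b | i <- iota 0 k.+1, b <- boxes n']
  end.

Fixpoint vsub (n a : seq nat) : seq nat :=
  match n, a with x :: n', y :: a' => (x - y) :: vsub n' a' | _, _ => n end.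

Lemma mem_boxes c n : (c \in boxes n) = all2 leq c n.
Proof.
elim: n c => [|k n IH] [|x c] //.
all: have -> : boxes (k :: n) = [seq i :: b | i <- iota 0 k.+1, b <- boxes n] by [].
- by apply/negbTE/allpairsPdep => [[i [b [_ _]]]].
- apply/allpairsPdep/idP => [[i [b [Hi Hb [-> ->]]]]|/andP[Hx Hc]].
    by rewrite /= -IH Hb andbT; rewrite mem_iota in Hi; lia.
  by exists x, c; rewrite mem_iota IH; split => //; lia.
Qed.

Lemma all2_size c n : all2 leq c n -> size c = size n.
Proof. by elim: c n => [|x c IH] [|y n] //= /andP[_ /IH ->]. Qed.

Lemma size_vsub n a : size (vsub n a) = size n.
Proof. by elim: n a => [|x n IH] [|y a] //=; rewrite IH. Qed.

Lemma nth_vsub n a j : size a = size n -> nth 0 (vsub n a) j = nth 0 n j - nth 0 a j.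
Proof.
elim: n a j => [|x n IH] [|y a] [|j] //=; rewrite ?nth_nil // => -[E].
exact: IH.
Qed.

Lemma all2P c n : size c = size n ->
  reflect (forall j, nth 0 c j <= nth 0 n j) (all2 leq c n).
Proof.
elim: c n => [|x c IH] [|y n] //=.
  by move=> _; constructor => j; rewrite !nth_nil.
move=> [E]; apply: (iffP andP) => [[Hxy /(IH _ E) H] [|j]|H]; [by []|exact: H|].
by split; [exact: (H 0) | apply/(IH _ E) => j; exact: (H j.+1)].
Qed.

Lemma all2_trans a b c : all2 leq a b -> all2 leq b c -> all2 leq a c.
Proof.
elim: a b c => [|x a IH] [|y b] [|z c] //= /andP[H1 H2] /andP[H3 H4].
by rewrite (leq_trans H1 H3) (IH _ _ H2 H4).
Qed.

Lemma sumn_le a n : all2 leq a n -> sumn a <= sumn n.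
Proof. elim: a n => [|x a IH] [|y n] //= /andP[H1 /IH H2]; lia. Qed.

Lemma sumn_vsub a n : all2 leq a n -> sumn (vsub n a) = sumn n - sumn a.
Proof.
elim: a n => [|x a IH] [|y n] //=.
move=> /andP[H1 H2]; rewrite (IH _ H2); have := sumn_le H2; lia.
Qed.

Lemma vsub_le a n : all2 leq a n -> all2 leq (vsub n a) n.
Proof.
move=> H; have E := all2_size H.
apply/all2P; first by rewrite size_vsub.
by move=> j; rewrite nth_vsub // leq_subr.
Qed.

Lemma size_expand (T : Type) (U : seq T) c : size c = size U -> size (expand U c) = sumn c.
Proof.
elim: U c => [|u U IH] [|k c] //= => [[E]].
by rewrite size_cat size_nseq IH.
Qed.

Lemma map_expand (T T' : Type) (f : T -> T') U c :
  map f (expand U c) = expand (map f U) c.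
Proof.
by elim: U c => [|u U IH] [|k c] //=; rewrite map_cat map_nseq IH.
Qed.

Lemma mem_expand (T : eqType) (U : seq T) c y : y \in expand U c -> y \in U.
Proof.
elim: U c => [|u U IH] [|k c] //=.
rewrite mem_cat mem_nseq in_cons => /orP[/andP[_ ->]//|/IH ->]; by rewrite orbT.
Qed.

Lemma expand_vsub (T : eqType) (U : seq T) n a : all2 leq a n -> size n = size U ->
  perm_eq (expand U n) (expand U a ++ expand U (vsub n a)).
Proof.
elim: U n a => [|u U IH] [|x n] [|y a] //=.
move=> /andP[Hyx Ha] [Hn].
rewrite -{1}(subnKC Hyx) nseqD -!catA perm_cat2l.
by rewrite perm_sym perm_catCA perm_cat2l perm_sym IH.
Qed.

Lemma zs_perm (G : zmodType) (s t : seq G) : perm_eq s t -> zero_sum s = zero_sum t.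
Proof. by move=> H; rewrite /zero_sum (perm_big _ H). Qed.

Lemma atom_perm (G : zmodType) (s t : seq G) : perm_eq s t -> atom s -> atom t.
Proof.
move=> H [H1 H2 H3]; split.
- by rewrite -size_eq0 -(perm_size H) size_eq0.
- by rewrite -(zs_perm H).
- move=> [s1 [s2 [A B C D E]]]; apply: H3; exists s1, s2; split => //.
  exact: perm_trans H E.
Qed.

Lemma sumn_has n : sumn n != 0 -> has (fun k => 0 < k) n.
Proof. elim: n => [|x n IH] //=; case: x => //= x _; by []. Qed.

Section Gen.
Variable G : zmodType.
Variable V : seq G.
Hypothesis HV : uniq V.

Definition cnt (t : seq G) := [seq count_mem v t | v <- V].

Lemma count_expand c y : size c = size V ->
  count_mem y (expand V c) = if y \in V then nth 0 c (index y V) else 0.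
Proof.
elim: V HV c => [|v U IH] /= HU [|k c] //= => [[E]].
move: HU => /andP[vU HU].
rewrite count_cat count_nseq IH // in_cons /=.
have [->|yv] := eqVneq y v.
  by rewrite (negbTE vU) mul1n addn0.
by rewrite mul0n add0n.
Qed.

Lemma perm_cnt t : {subset t <= V} -> perm_eq t (expand V (cnt t)).
Proof.
move=> Ht; apply/allP => y _; apply/eqP.
rewrite count_expand ?size_map //; case: ifP => Hy.
  by rewrite (nth_map y) ?index_mem // nth_index.
apply/count_memPn; apply/negP => /Ht; by rewrite Hy.
Qed.

Lemma nth_cnt t j : j < size V -> nth 0 (cnt t) j = count_mem (nth 0%R V j) t.
Proof. by move=> Hj; rewrite (nth_map 0%R). Qed.

Lemma split_expand n s r : size n = size V -> perm_eq (expand V n) (s ++ r) ->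
  [/\ all2 leq (cnt s) n, perm_eq s (expand V (cnt s))
    & perm_eq r (expand V (vsub n (cnt s)))].
Proof.
move=> Hn Hp.
have sub : {subset s ++ r <= V} by move=> x; rewrite -(perm_mem Hp); apply: mem_expand.
have hs : {subset s <= V} by move=> x Hx; apply: sub; rewrite mem_cat Hx.
have hr : {subset r <= V} by move=> x Hx; apply: sub; rewrite mem_cat Hx orbT.
have cntE j : j < size V -> nth 0 n j = nth 0 (cnt s) j + nth 0 (cnt r) j.
  move=> Hj; rewrite !nth_cnt //.
  move/permP: Hp => /(_ (pred1 (nth 0%R V j))).
  rewrite count_cat count_expand // mem_nth // index_uniq //.
have Hsz : size (cnt s) = size n by rewrite size_map.
have Hle : all2 leq (cnt s) n.
  apply/all2P => // j; case: (ltnP j (size V)) => Hj.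
    by rewrite (cntE j Hj) leq_addr.
  by rewrite nth_default // Hsz Hn.
split => //; first exact: perm_cnt.
suff -> : vsub n (cnt s) = cnt r by apply: perm_cnt.
apply: (@eq_from_nth _ 0); first by rewrite size_vsub size_map.
move=> j; rewrite size_vsub Hn => Hj.
by rewrite nth_vsub // (cntE j Hj) addKn.
Qed.

Variable zsc : seq nat -> bool.
Hypothesis Hzs : forall c, zsc c = zero_sum (expand V c).

Definition atomb c := (0 < sumn c) && zsc c &&
  ~~ has (fun d => (0 < sumn d) && (sumn d < sumn c) && zsc d) (boxes c).

Lemma atombP c : size c = size V -> atomb c <-> atom (expand V c).
Proof.
move=> Hc; split.
- move=> /andP[/andP[Hpos Hz] Hh]; split.
  + by rewrite -size_eq0 size_expand // -lt0n.
  + by rewrite -Hzs.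
  + move=> [s1 [s2 [n1 n2 z1 z2 Hp]]].
    have [Hle Hs1 Hs2] := split_expand Hc Hp.
    move/negP: Hh; apply; apply/hasP; exists (cnt s1); first by rewrite mem_boxes.
    have Hsz : size (cnt s1) = size V by rewrite size_map.
    have E1 : sumn (cnt s1) = size s1 by rewrite -(@size_expand _ V) // -(perm_size Hs1).
    have E2 : sumn c = size s1 + size s2 by rewrite -(@size_expand _ V) // (perm_size Hp) size_cat.
    rewrite E1 E2 Hzs -(zs_perm Hs1) z1 andbT.
    move: n1 n2; rewrite -!size_eq0 -!lt0n => P1 P2; apply/andP; split => //; by rewrite -[X in X < _]addn0 ltn_add2l.
- move=> [Hne Hz Hnd].
  have Hpos : 0 < sumn c by rewrite -(@size_expand _ V) // lt0n size_eq0.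
  rewrite /atomb Hpos Hzs Hz /=; apply/hasPn => d Hd; apply/negP => /andP[/andP[Hd0 Hdc] Hzd].
  rewrite mem_boxes in Hd.
  have Hsd : size d = size V by rewrite (all2_size Hd).
  have Hp := expand_vsub Hd Hc.
  apply: Hnd; exists (expand V d), (expand V (vsub c d)); split => //.
  + by rewrite -size_eq0 size_expand // -lt0n.
  + by rewrite -size_eq0 size_expand ?size_vsub // sumn_vsub //; lia.
  + by rewrite -Hzs.
  + move: Hz; rewrite (zs_perm Hp) /zero_sum big_cat /=.
    by move: Hzd; rewrite Hzs /zero_sum => /eqP ->; rewrite GRing.add0r.
Qed.


Lemma le_sumn_eq d c : all2 leq d c -> sumn c <= sumn d -> c = d.
Proof.
elim: d c => [|x d IH] [|y c] //=.
move=> /andP[H1 H2] H3; have H4 := sumn_le H2.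
have Exy : y = x by lia.
rewrite Exy (IH c H2) //; lia.
Qed.

Definition single i m := [seq (if j == i then m else 0) | j <- iota 0 (size V)].

Lemma size_single i m : size (single i m) = size V.
Proof. by rewrite size_map size_iota. Qed.

Lemma nth_single i m j : j < size V -> nth 0 (single i m) j = if j == i then m else 0.
Proof. by move=> Hj; rewrite (nth_map 0) ?size_iota // nth_iota. Qed.

Lemma atomb_ord2 c i : size c = size V -> atomb c -> 1 < nth 0 c i ->
  (nth 0%R V i + nth 0%R V i = 0)%R -> c = single i 2.
Proof.
move=> Hc Ha Hci Hord.
have Hi : i < size V.
  by rewrite ltnNge; apply/negP => Hi; rewrite nth_default ?Hc in Hci.
set d := single i 2.
have Hsd : size d = size V by apply: size_single.
have Hdc : all2 leq d c.
  apply/all2P; first by rewrite Hsd Hc.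
  move=> j; case: (ltnP j (size V)) => Hj.
    rewrite nth_single //; case: eqP => [->|_] //; exact: ltnW.
  by rewrite nth_default // Hsd.
have Hp : perm_eq (expand V d) [:: nth 0%R V i; nth 0%R V i].
  apply/allP => y _; apply/eqP; rewrite count_expand //=.
  case: ifP => Hy.
    rewrite nth_single ?index_mem //.
    have -> : (index y V == i) = (nth 0%R V i == y).
      apply/eqP/eqP => [<-|<-]; first by rewrite nth_index.
      by rewrite index_uniq.
    by case: eqP.
  case: eqP => // E; by rewrite -E mem_nth in Hy.
have Hzd : zsc d.
  by rewrite Hzs (zs_perm Hp) /zero_sum !big_cons big_nil GRing.addr0 Hord.
have Hsumd : sumn d = 2 by rewrite -(@size_expand _ V) // (perm_size Hp).
apply: le_sumn_eq => //; rewrite Hsumd.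
move: Ha => /andP[_ /hasPn /(_ d)]; rewrite mem_boxes => /(_ Hdc).
rewrite Hsumd Hzd /= andbT; by rewrite -leqNgt.
Qed.

Lemma AT2_1 n0 a : size n0 = size V ->
  a \in filter atomb (boxes (map (minn 1) n0) ++ [seq single i 2 | i <- iota 0 (size V)]) ->
  atomb a /\ size a = size V.
Proof.
move=> Hn0; rewrite mem_filter mem_cat => /andP[Ha Hb]; split => //.
case/orP: Hb => [Hb|/mapP[i _ ->]]; last exact: size_single.
by rewrite mem_boxes in Hb; rewrite (all2_size Hb) size_map.
Qed.

Lemma AT2_2 n0 a : size n0 = size V -> (forall x, x \in V -> (x + x = 0)%R) ->
  atomb a -> size a = size V -> all2 leq a n0 ->
  a \in filter atomb (boxes (map (minn 1) n0) ++ [seq single i 2 | i <- iota 0 (size V)]).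
Proof.
move=> Hn0 Hord Ha Hsa Hle; rewrite mem_filter Ha mem_cat /=.
case: (boolP (has (fun x => 1 < x) a)) => [/hasP[x Hx H1x]|/hasPn Hs].
  have Hi : index x a < size V by rewrite -Hsa index_mem.
  have E := atomb_ord2 Hsa Ha (i := index x a).
  rewrite E ?nth_index //; last by apply: Hord; rewrite mem_nth.
  by apply/orP; right; apply: map_f; rewrite mem_iota.
apply/orP; left; rewrite mem_boxes; apply/all2P; first by rewrite size_map Hsa.
move=> j; case: (ltnP j (size a)) => Hj; last by rewrite nth_default.
have Hj0 : j < size n0 by rewrite Hn0 -Hsa.
rewrite (nth_map 0) // leq_min.
have := Hs _ (mem_nth 0 Hj); rewrite -leqNgt => ->.
have Hsz := all2_size Hle; by move/(all2P Hsz): Hle => /(_ j).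
Qed.

Lemma AT1_1 n0 a : size n0 = size V -> a \in filter atomb (boxes n0) -> atomb a /\ size a = size V.
Proof.
by move=> Hn0; rewrite mem_filter mem_boxes => /andP[Ha Hb]; rewrite (all2_size Hb).
Qed.

Lemma AT1_2 n0 a : atomb a -> size a = size V -> all2 leq a n0 -> a \in filter atomb (boxes n0).
Proof. by move=> Ha _ Hb; rewrite mem_filter mem_boxes Ha. Qed.

Fixpoint lens (A : seq (seq nat)) (fuel : nat) (n : seq nat) : seq nat :=
  match fuel with
  | 0 => [::]
  | fuel'.+1 =>
    if sumn n == 0 then [:: 0] else
    flatten [seq map succn (lens A fuel' (vsub n a)) |
              a <- A & all2 leq a n && (0 < nth 0 a (find (fun k => 0 < k) n))]
  end.

Variable n0 : seq nat.
Hypothesis Hn0 : size n0 = size V.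
Variable AT : seq (seq nat).
Hypothesis HAT1 : forall a, a \in AT -> atomb a /\ size a = size V.
Hypothesis HAT2 : forall a, atomb a -> size a = size V -> all2 leq a n0 -> a \in AT.

Lemma lensP fuel : forall n k, size n = size V -> all2 leq n n0 -> sumn n < fuel ->
  (in_lengths (expand V n) k <-> k \in lens AT fuel n).
Proof.
elim: fuel => [|fuel IH] n k Hn Hnn0 Hf //=.
case: eqP => Hs0.
  have E : expand V n = [::] by apply/size0nil; rewrite size_expand.
  rewrite E inE; split.
    move=> [As [Hk Hat Hp]]; move: Hp Hk Hat; case: As => [|A As] /=.
      by move=> _ <-.
    move=> /perm_size /= /esym; rewrite size_cat => /eqP; rewrite addn_eq0.
    move=> /andP[/eqP /size0nil -> _] _ /(_ [::]); rewrite inE eqxx => /(_ isT).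
    by case.
  by move/eqP => ->; exists [::]; split.
split.
- move=> [As [Hk Hat Hp]].
  have Hh := sumn_has (introN eqP Hs0).
  set i := find _ n.
  have Hi : i < size n by rewrite -has_find.
  have Hni : 0 < nth 0 n i by apply: (nth_find 0 Hh).
  set y := nth 0%R V i.
  have Hy : y \in expand V n.
    have Hc : count_mem y (expand V n) = nth 0 n i.
      by rewrite count_expand // mem_nth -?Hn // index_uniq -?Hn.
    by rewrite -has_pred1 has_count Hc.
  move: Hy; rewrite (perm_mem Hp) => /flattenP [A HA yA].
  have Hp2 : perm_eq (expand V n) (A ++ flatten (rem A As)).
    apply: (perm_trans Hp); exact: (perm_flatten (perm_to_rem HA)).
  have [Hle HsA Hr] := split_expand Hn Hp2.
  set a := cnt A in Hle HsA Hr.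
  have Hsa : size a = size V by rewrite size_map.
  have Hata : atomb a by apply/atombP => //; apply: atom_perm HsA (Hat A HA).
  have Hai : 0 < nth 0 a i.
    by rewrite nth_cnt -?Hn // -has_count has_pred1.
  have Hsum : 0 < sumn a by move: Hata => /andP[/andP[]].
  apply/flattenP; exists (map succn (lens AT fuel (vsub n a))).
    apply/mapP; exists a => //.
    rewrite mem_filter Hle Hai /=; apply: HAT2 => //.
    exact: all2_trans Hle Hnn0.
  have Hk' : k = (size (rem A As)).+1.
    by rewrite -Hk size_rem //; case: As HA {Hp Hp2 Hat Hk Hr}.
  rewrite Hk'; apply: map_f; apply/IH.
  + by rewrite size_vsub.
  + exact: all2_trans (vsub_le Hle) Hnn0.
  + rewrite sumn_vsub //; lia.
  + exists (rem A As); split => //.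
    * by move=> B HB; apply: Hat; apply: mem_rem HB.
    * by rewrite perm_sym.
- move=> /flattenP [L /mapP [a Ha ->] /mapP [k' Hk' ->]].
  move: Ha; rewrite mem_filter => /andP[/andP[Hle Hai]].
  move=> /HAT1 [Hata Hsa].
  have Hsum : 0 < sumn a by move: Hata => /andP[/andP[]].
  have [As [Hk Hat Hp]] : in_lengths (expand V (vsub n a)) k'.
    apply/IH => //.
    + by rewrite size_vsub.
    + exact: all2_trans (vsub_le Hle) Hnn0.
    + rewrite sumn_vsub //; lia.
  exists (expand V a :: As); split => /=; first by rewrite Hk.
  + move=> B; rewrite inE => /orP[/eqP ->|]; last exact: Hat.
    by apply/atombP.
  + apply: (perm_trans (expand_vsub Hle Hn)); by rewrite perm_cat2l.
Qed.

Lemma system_ok fuel (S : seq nat) : sumn n0 < fuel -> zsc n0 ->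
  all (fun k => k \in lens AT fuel n0) S && all (fun k => k \in S) (lens AT fuel n0) ->
  in_system_of_lengths G (fun k => k \in S).
Proof.
move=> Hf Hz /andP[/allP H1 /allP H2].
exists (expand V n0); split; first by rewrite -Hzs.
move=> k /=; rewrite (@lensP fuel n0 k) //; last by apply/all2P => // j.
by split; [apply: H1 | apply: H2].
Qed.

End Gen.

Definition U6 : seq nat := [:: 1; 2; 4; 5].
Definition V6 : seq 'Z_6 := [seq (k%:R)%R | k <- U6].
Definition zsc6 (c : seq nat) : bool := sumn (expand U6 c) %% 6 == 0.

Lemma Hzs6 c : zsc6 c = zero_sum (expand V6 c).
Proof.
rewrite /zero_sum /V6 -map_expand big_map -natr_sum -sumnE.
by rewrite -val_eqE /= val_Zp_nat.
Qed.

Lemma HV6 : uniq V6. Proof. by []. Qed.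

Definition fb (b : seq bool) : 'rV['Z_2]_5 := \row_(i < 5) ((nth false b i : nat)%:R)%R.

Fixpoint xorv (a b : seq bool) : seq bool :=
  match a, b with
  | x :: a', y :: b' => (x (+) y) :: xorv a' b'
  | [::], _ => b
  | _ :: _, [::] => a
  end.

Lemma nth_xorv a b i : nth false (xorv a b) i = nth false a i (+) nth false b i.
Proof.
elim: a b i => [|x a IH] [|y b] [|i] //=; rewrite ?addbF //.
Qed.

Lemma Z2_11 : ((1%:R : 'Z_2) + 1%:R = 0)%R. Proof. by apply/val_inj. Qed.
Lemma Z2_10 : ((1%:R : 'Z_2) == 0)%R = false. Proof. by []. Qed.

Lemma fb_xor a b : fb (xorv a b) = (fb a + fb b)%R.
Proof.
apply/rowP => i; rewrite !mxE nth_xorv.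
case: (nth false a i); case: (nth false b i) => /=;
  rewrite ?GRing.add0r ?GRing.addr0 //; exact: esym Z2_11.
Qed.

Lemma fb_nil : fb [::] = 0%R.
Proof. by apply/rowP => i; rewrite !mxE nth_nil. Qed.

Definition xorfold (l : seq (seq bool)) := foldr xorv [::] l.

Lemma sum_fb l : (\sum_(x <- l) fb x)%R = fb (xorfold l).
Proof.
elim: l => [|x l IH]; first by rewrite big_nil fb_nil.
by rewrite big_cons IH /= fb_xor.
Qed.

Lemma fb_eq0 z : (fb z == 0)%R = all (fun i => ~~ nth false z i) (iota 0 5).
Proof.
apply/eqP/allP => [H i|H].
  rewrite mem_iota => /andP[_ Hi].
  have := congr1 (fun M : 'rV['Z_2]_5 => M ord0 (Ordinal Hi)) H; rewrite !mxE /=.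
  by case: (nth false z i) => //= /eqP; rewrite Z2_10.
apply/rowP => i; rewrite !mxE.
have := H i; rewrite mem_iota /= => /(_ (ltn_ord i)).
by case: (nth false z i).
Qed.

Definition U2 : seq (seq bool) :=
  [:: [:: true; false; false; false; false];
      [:: false; true; false; false; false];
      [:: false; false; true; false; false];
      [:: false; false; false; true; false];
      [:: false; false; false; false; true];
      [:: true; true; true; true; true];
      [:: true; true; false; false; false]].
Definition V2 : seq 'rV['Z_2]_5 := map fb U2.
Definition zsc2 (c : seq nat) : bool :=
  all (fun i => ~~ nth false (xorfold (expand U2 c)) i) (iota 0 5).

Lemma Hzs2 c : zsc2 c = zero_sum (expand V2 c).
Proof. by rewrite /zero_sum /V2 -map_expand big_map sum_fb fb_eq0. Qed.

Lemma fb_inj a b : size a = 5 -> size b = 5 -> fb a = fb b -> a = b.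
Proof.
move=> Ha Hb H; apply: (@eq_from_nth _ false); first by rewrite Ha Hb.
move=> i; rewrite Ha => Hi.
have := congr1 (fun M : 'rV['Z_2]_5 => M ord0 (Ordinal Hi)) H; rewrite !mxE /=.
case: (nth false a i); case: (nth false b i) => //= /eqP; rewrite ?Z2_10 //.
Qed.

Lemma HV2 : uniq V2.
Proof.
rewrite /V2 map_inj_in_uniq //.
have Hall : all (fun x => size x == 5) U2 by [].
move=> a b Ha Hb; apply: fb_inj; apply/eqP; exact: (allP Hall).
Qed.

Lemma fb_double b : (fb b + fb b = 0)%R.
Proof.
rewrite -fb_xor -fb_nil; apply/rowP => i; rewrite !mxE nth_xorv addbb.
by rewrite nth_nil.
Qed.

Definition chk (L S : seq nat) := all (fun k => k \in L) S && all (fun k => k \in S) L.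

Lemma C6_ok n0 fuel S : size n0 = size V6 ->
  (sumn n0 < fuel) && zsc6 n0 && chk (lens (filter (atomb zsc6) (boxes n0)) fuel n0) S ->
  in_system_of_lengths 'Z_6 (fun k => k \in S).
Proof.
move=> Hn0 /andP[/andP[Hf Hz] Hc].
exact: (system_ok HV6 Hzs6 Hn0 (fun a => @AT1_1 _ V6 zsc6 n0 a Hn0)
  (@AT1_2 _ V6 zsc6 n0) Hf Hz Hc).
Qed.

Definition AT2 n0 := filter (atomb zsc2)
  (boxes (map (minn 1) n0) ++ [seq single V2 i 2 | i <- iota 0 (size V2)]).

Lemma C2_ok n0 fuel S : size n0 = size V2 ->
  (sumn n0 < fuel) && zsc2 n0 && chk (lens (AT2 n0) fuel n0) S ->
  in_system_of_lengths 'rV['Z_2]_5 (fun k => k \in S).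
Proof.
move=> Hn0 /andP[/andP[Hf Hz] Hc].
have Hord : forall x, x \in V2 -> (x + x = 0)%R by move=> x /mapP[b _ ->]; exact: fb_double.
exact: (system_ok HV2 Hzs2 Hn0 (fun a => @AT2_1 _ V2 zsc2 n0 a Hn0)
  (fun a => @AT2_2 _ V2 HV2 zsc2 Hzs2 n0 a Hn0 Hord) Hf Hz Hc).
Qed.

Theorem lemma3p4 :
  forall S : seq nat,
    S \in [:: [:: 3; 4; 7]; [:: 3; 6; 7]; [:: 4; 5; 8; 9]; [:: 4; 7; 8; 11];
              [:: 5; 8; 9; 12; 13]] ->
    in_system_of_lengths 'Z_6 (fun k => k \in S) /\
    in_system_of_lengths 'rV['Z_2]_5 (fun k => k \in S).
Proof.
move=> S; rewrite !inE => /or4P[|||/orP[|]] /eqP ->; split.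
- apply: (@C6_ok [:: 6; 1; 0; 8] 20); first by []. vm_compute; reflexivity.
- apply: (@C2_ok [:: 3; 3; 2; 2; 2; 2; 1] 20); first by []. vm_compute; reflexivity.
- apply: (@C6_ok [:: 6; 0; 1; 10] 20); first by []. vm_compute; reflexivity.
- apply: (@C2_ok [:: 2; 2; 3; 3; 3; 3; 1] 20); first by []. vm_compute; reflexivity.
- apply: (@C6_ok [:: 8; 0; 1; 12] 25); first by []. vm_compute; reflexivity.
- apply: (@C2_ok [:: 4; 4; 3; 3; 3; 3; 1] 25); first by []. vm_compute; reflexivity.
- apply: (@C6_ok [:: 10; 1; 0; 12] 25); first by []. vm_compute; reflexivity.
- apply: (@C2_ok [:: 3; 3; 4; 4; 4; 4; 1] 25); first by []. vm_compute; reflexivity.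
- apply: (@C6_ok [:: 12; 0; 1; 16] 30); first by []. vm_compute; reflexivity.
- apply: (@C2_ok [:: 4; 4; 5; 5; 5; 5; 1] 30); first by []. vm_compute; reflexivity.
Qed.
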